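(* Let $m\ge1$ and $0\le r\le m(q-1)$, written $r=t(q-1)+s$ with $t\ge0$, $0\le s<q-1$, and let $1\le b\le q^m$. Then $RM_q(r,m)$ is a $b$-symbol MDS code if and only if either (a) $b\ge q^m-(q-s)q^{m-t-1}+1$, or (b) $RM_q(r,m)$ is a $1$-symbol MDS code (i.e., MDS in the Hamming metric).
   Context: Fix an enumeration $\mathbb{F}_q=\{\alpha_1=0,\alpha_2,\dots,\alpha_q\}$, order $\mathbb{F}_q$ by $\alpha_1<\dots<\alpha_q$, and order $\mathbb{F}_q^m$ lexicographically as $P_1<\dots<P_{q^m}$. $RM_q(r,m)=\{(f(P_1),\dots,f(P_{q^m})) : f\in\mathbb{F}_q[X_1,\dots,X_m],\ \deg f\le r\}$. For $\mathbf{x}\in\mathbb{F}_q^L$, $\chi_b(\mathbf{x})=\{i:(x_i,\dots,x_{i+b-1})\ne\mathbf{0}\}$ (indices mod $L$), $w_b(\mathbf{x})=|\chi_b(\mathbf{x})|$, $d_b(C)=\min_{\mathbf{0}\ne\mathbf{c}\in C}w_b(\mathbf{c})$. An $[n,k]_q$-linear code $C$ is a $b$-symbol MDS code if $d_b(C)=\min\{n-k+b,n\}$. *)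

(* Defs.v *)
From HB Require Import structures.
From mathcomp Require Import all_boot all_order all_algebra all_field.
From mathcomp Require Import mpoly.
From Stdlib Require Import ClassicalEpsilon.

Set Implicit Arguments.
Unset Strict Implicit.
Unset Printing Implicit Defensive.

Import GRing.Theory.
Local Open Scope ring_scope.

Definition pbool (P : Prop) : bool :=
  if excluded_middle_informative P then true else false.

Section Defs.
Variable F : finFieldType.

Lemma card_F_gt0 : (0 < #|F|)%N.
Proof. by apply/card_gt0P; exists 0. Qed.

Definition digit (m j : nat) (l : 'I_m) : 'I_#|F| :=
  Ordinal (ltn_pmod (j %/ #|F| ^ (m - 1 - l)) card_F_gt0).

(* alpha : enumeration of F_q, alpha_(i+1) = alpha i (0-indexed).
   The 0-indexed point P_(j+1) of F_q^m in lexicographic order. *)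
Definition RMpoint (alpha : 'I_#|F| -> F) (m j : nat) : 'I_m -> F :=
  fun l => alpha (@digit m j l).

Definition evalvec (alpha : 'I_#|F| -> F) (m : nat) (p : {mpoly F[m]})
  : 'rV[F]_(#|F| ^ m) :=
  \row_(j < #|F| ^ m) p.@[@RMpoint alpha m j].

(* c is a codeword of RM_q(r,m): c = evalvec f with deg f <= r
   (msize p = 1 + total degree, 0 for p = 0). *)
Definition inRM (alpha : 'I_#|F| -> F) (r m : nat) (c : 'rV[F]_(#|F| ^ m)) : Prop :=
  exists p : {mpoly F[m]}, (msize p <= r.+1)%N /\ c = @evalvec alpha m p.

Definition RM (alpha : 'I_#|F| -> F) (r m : nat) : {set 'rV[F]_(#|F| ^ m)} :=
  [set c | pbool (@inRM alpha r m c)].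

(* b-symbol support: i such that (x_i, ..., x_{i+b-1}) (indices mod n) is nonzero,
   i.e. some j with (j - i) mod n < b and x_j != 0. *)
Definition chi_b (n b : nat) (x : 'rV[F]_n) : {set 'I_n} :=
  [set i : 'I_n | [exists j : 'I_n, (((j + n - i) %% n < b)%N) && (x 0 j != 0)]].

Definition w_b (n b : nat) (x : 'rV[F]_n) : nat := #|chi_b b x|.

Definition is_db (n b : nat) (C : {set 'rV[F]_n}) (d : nat) : Prop :=
  (exists2 c, c \in C & (c != 0) /\ w_b b c = d) /\
  (forall c, c \in C -> c != 0 -> (d <= w_b b c)%N).

Definition code_dim (n : nat) (C : {set 'rV[F]_n}) : nat := \dim <<enum C>>%VS.

Definition bsymbol_MDS (n b : nat) (C : {set 'rV[F]_n}) : Prop :=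
  is_db b C (minn (n - code_dim C + b) n).

End Defs.

(* Main.v *)
Require Import Defs.
From HB Require Import structures.
From mathcomp Require Import all_boot all_order all_algebra all_field.
From mathcomp Require Import mpoly.
From mathcomp Require Import zify.
From Stdlib Require Import ClassicalEpsilon.

Set Implicit Arguments.
Unset Strict Implicit.
Unset Printing Implicit Defensive.

Import GRing.Theory Num.Theory.
Local Open Scope ring_scope.

Section Weights.
Variable F : finFieldType.

Definition wt n (x : 'rV[F]_n) := #|[set j : 'I_n | x 0 j != 0]|.

Lemma modd n (i j : 'I_n) :
  ((j + n - i) %% n = if (i <= j)%N then j - i else j + n - i)%N.
Proof.
have hi := ltn_ord i; have hj := ltn_ord j.
case: leqP => h.
  have -> : (j + n - i = (j - i) + n)%N by lia.
  by rewrite modnDr modn_small //; lia.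
by rewrite modn_small //; lia.
Qed.

Lemma chi1 n (x : 'rV[F]_n) : chi_b 1 x = [set j | x 0 j != 0].
Proof.
apply/setP => i; rewrite !inE; apply/existsP/idP.
  case=> j /andP[h hx]; rewrite modd in h.
  have hi := ltn_ord i; have hj := ltn_ord j.
  have -> : i = j by apply/val_inj => /=; move: h; case: ifP; lia.
  exact hx.
move=> h; exists i; rewrite h andbT modd leqnn; lia.
Qed.

Lemma chi_mono n b (x : 'rV[F]_n) : chi_b b x \subset chi_b b.+1 x.
Proof.
apply/subsetP => i; rewrite !inE => /existsP[j /andP[h hx]].
apply/existsP; exists j; rewrite hx andbT; lia.
Qed.

Lemma chi_monoS n b b' (x : 'rV[F]_n) : (b <= b')%N -> chi_b b x \subset chi_b b' x.
Proof.
move=> hb; apply/subsetP => i; rewrite !inE => /existsP[j /andP[h hx]].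
apply/existsP; exists j; rewrite hx andbT; lia.
Qed.

Lemma chi_shift n b (x : 'rV[F]_n) (i : 'I_n) :
  ordS i \in chi_b b x -> i \in chi_b b.+1 x.
Proof.
rewrite !inE => /existsP[j /andP[h hx]].
apply/existsP; exists j; rewrite hx andbT.
move: h; rewrite !modd /=.
have hi := ltn_ord i; have hj := ltn_ord j.
have [hlt|hge] := ltnP i.+1 n.
  rewrite modn_small //; case: (ltnP i j); case: (leqP i j); lia.
have hn : i.+1 = n by lia.
rewrite hn modnn leq0n subn0; case: (leqP i j); lia.
Qed.

Lemma iter_ordS n k (i : 'I_n) : val (iter k (@ordS n) i) = ((i + k) %% n)%N.
Proof.
elim: k => [|k IH] /=; first by rewrite addn0 modn_small.
by rewrite IH -addn1 modnDml addn1 addnS.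
Qed.

Lemma proper_step n (A : {set 'I_n}) :
  A != set0 -> A != setT -> exists i, (i \notin A) && (ordS i \in A).
Proof.
move=> /set0Pn[a ha] hT.
apply/existsP; apply: contraR hT => /existsPn H.
have H1 : forall k i, iter k (@ordS n) i \in A -> i \in A.
  elim=> [|k IH] i //; rewrite iterSr => /IH.
  by have := H i; rewrite negb_and negbK => /orP[] // /negbTE ->.
apply/eqP/setP => i; rewrite inE; apply: (H1 (a + n - i)%N).
suff -> : iter (a + n - i) (@ordS n) i = a by [].
apply/val_inj; rewrite iter_ordS.
have hi := ltn_ord i; have ha' := ltn_ord a.
have -> : (i + (a + n - i) = a + n)%N by lia.
by rewrite modnDr modn_small.
Qed.

Lemma nz_supp n (x : 'rV[F]_n) : x != 0 -> exists j, x 0 j != 0.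
Proof.
move=> hx; apply/existsP; apply: contraR hx => /existsPn H.
apply/eqP/rowP => j; rewrite mxE; have := H j; by rewrite negbK => /eqP.
Qed.

Lemma LBb n b (x : 'rV[F]_n) : x != 0 -> (1 <= b)%N ->
  (minn n (wt x + b - 1) <= w_b b x)%N.
Proof.
move=> hx; case: b => [//|c] _.
elim: c => [|c IH].
  by rewrite /w_b chi1 /wt addn1 subn1 /= geq_minr.
have [hT|hT] := eqVneq (chi_b c.+1 x) setT.
  have : (n <= w_b c.+2 x)%N.
    have := subset_leq_card (chi_mono c.+1 x).
    by rewrite /w_b hT cardsT card_ord.
  move=> h; exact: leq_trans (geq_minl _ _) h.
have hne : chi_b c.+1 x != set0.
  have [j hj] := nz_supp hx; apply/set0Pn; exists j.
  by apply: (subsetP (chi_monoS x (isT : (1 <= c.+1)%N))); rewrite chi1 inE.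
have [i /andP[hi1 hi2]] := proper_step hne hT.
have hsub : i |: chi_b c.+1 x \subset chi_b c.+2 x.
  by rewrite subUset sub1set chi_shift ?chi_mono.
have := subset_leq_card hsub; rewrite cardsU1 hi1 /= => h.
rewrite /w_b in IH *; move: IH h; move: #|chi_b c.+1 x| #|chi_b c.+2 x| (wt x) => u v w; lia.
Qed.

Lemma card_ord_le n (A : {set 'I_n}) (s : seq nat) :
  (forall i : 'I_n, i \in A -> nat_of_ord i \in s) -> (#|A| <= size s)%N.
Proof.
move=> H; rewrite cardE -(size_map val).
apply: uniq_leq_size; first by rewrite (map_inj_uniq val_inj) enum_uniq.
by move=> _ /mapP[i hi ->]; apply: H; rewrite -mem_enum.
Qed.

Lemma arith1 (i j w n b : nat) : (j < w)%N -> (i < n)%N -> (j < n)%N ->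
  ((if (i <= j)%N then j - i else j + n - i) < b)%N -> ((i < w) || (n - b < i))%N.
Proof. case: (leqP i j) => h *; apply/orP; lia. Qed.

Lemma UBb n b w (x : 'rV[F]_n) : (1 <= b)%N -> (forall j : 'I_n, (w <= j)%N -> x 0 j = 0) ->
  (w_b b x <= w + b - 1)%N.
Proof.
move=> hb H.
have hsub : chi_b b x \subset [set i : 'I_n | (i < w)%N] :|: [set i : 'I_n | (n - b < i)%N].
  apply/subsetP => i; rewrite !inE => /existsP[j /andP[h hx]].
  have hjw : (j < w)%N by rewrite ltnNge; apply/negP => /H /eqP; rewrite (negbTE hx).
  rewrite modd in h; have hi := ltn_ord i; have hj := ltn_ord j.
  exact: arith1 hjw hi hj h.
apply: (leq_trans (subset_leq_card hsub)); apply: (leq_trans (leq_card_setU _ _)).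
have h1 : (#|[set i : 'I_n | (i < w)%N]| <= size (iota 0 w))%N.
  by apply: card_ord_le => i; rewrite inE mem_iota add0n leq0n.
have h2 : (#|[set i : 'I_n | (n - b < i)%N]| <= size (iota (n - b).+1 (b - 1)))%N.
  apply: card_ord_le => i; rewrite inE mem_iota; have := ltn_ord i.
  move: (nat_of_ord i) => k; lia.
rewrite size_iota in h1; rewrite size_iota in h2; move: h1 h2; move: #|_| #|_| => u v; lia.
Qed.

Lemma wb_le_n n b (x : 'rV[F]_n) : (w_b b x <= n)%N.
Proof. by rewrite /w_b; apply: leq_trans (max_card _) _; rewrite card_ord. Qed.

End Weights.

Section Main.
Variable F : finFieldType.
Local Notation q := #|F|.

Lemma q_gt1 : (1 < q)%N. Proof. exact: card_finNzRing_gt1. Qed.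
Lemma q_gt0 : (0 < q)%N. Proof. by have := q_gt1; lia. Qed.
Lemma qX_gt0 e : (0 < q ^ e)%N. Proof. by rewrite expn_gt0 q_gt0. Qed.

Lemma divX_step j e : (j %/ q ^ e %/ q = j %/ q ^ e.+1)%N.
Proof. by rewrite -divnMA expnSr. Qed.

Lemma prefix_eq m j j' : (j < q ^ m)%N -> (j' < q ^ m)%N ->
  (forall l, (l < m)%N -> (j %/ q ^ (m - 1 - l)) %% q = (j' %/ q ^ (m - 1 - l)) %% q)%N ->
  j = j'.
Proof.
move=> hj hj' H.
suff K : forall k, (k <= m)%N -> (j %/ q ^ (m - k))%N = (j' %/ q ^ (m - k))%N.
  by have := K m (leqnn m); rewrite subnn expn0 !divn1.
elim=> [|k IH] hk; first by rewrite subn0 !divn_small.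
have hk' : (k <= m)%N by lia.
have He : (m - k = (m - k.+1).+1)%N by lia.
rewrite (divn_eq (j %/ q ^ (m - k.+1)) q) (divn_eq (j' %/ q ^ (m - k.+1)) q).
rewrite !divX_step -He IH //.
have -> : (m - k.+1 = m - 1 - k)%N by lia.
by rewrite H //; lia.
Qed.

Lemma zero_prefix m t j : (t <= m)%N -> (j < q ^ m)%N ->
  (forall l, (l < t)%N -> (j %/ q ^ (m - 1 - l)) %% q = 0)%N <-> (j < q ^ (m - t))%N.
Proof.
move=> + hj; elim: t => [|t IH] ht; first by rewrite subn0; split.
have ht' : (t <= m)%N by lia.
have He : (m - t = (m - 1 - t).+1)%N by lia.
have He' : (m - t.+1 = m - 1 - t)%N by lia.
split.
  move=> H.
  have /(IH ht') h1 : (forall l, (l < t)%N -> (j %/ q ^ (m - 1 - l)) %% q = 0)%N.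
    by move=> l hl; apply: H; lia.
  have h2 := H t (ltnSn t).
  rewrite He expnS -ltn_divLR ?qX_gt0 // in h1.
  rewrite modn_small // in h2.
  rewrite He' -[X in (_ < X)%N]mul1n -ltn_divLR ?qX_gt0 //; lia.
move=> h.
have hq : (j < q ^ (m - t))%N.
  apply: leq_trans h _; rewrite leq_exp2l ?q_gt1 //; lia.
have {}IH := proj2 (IH ht') hq.
move=> l hl; have [hlt|hle] := ltnP l t; first exact: IH.
have -> : l = t by lia.
by rewrite He' in h; rewrite divn_small // mod0n.
Qed.

Lemma supp_prefix m t s j : (t < m)%N -> (s < q)%N -> (j < q ^ m)%N ->
  ((forall l, (l < t)%N -> (j %/ q ^ (m - 1 - l)) %% q = 0) /\
     ((j %/ q ^ (m - 1 - t)) %% q < q - s))%N <-> (j < (q - s) * q ^ (m - t - 1))%N.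
Proof.
move=> htm hs hj.
have He : (m - t = (m - 1 - t).+1)%N by lia.
have He' : (m - t - 1 = m - 1 - t)%N by lia.
rewrite He' (zero_prefix (ltnW htm) hj) He expnS -!ltn_divLR ?qX_gt0 //.
split.
  by move=> [h1 h2]; rewrite modn_small in h2.
move=> h; split; first by lia.
by rewrite modn_small //; lia.
Qed.



Definition Dfun (r m : nat) : nat :=
  if (m * (q - 1) <= r)%N then 1%N
  else ((q - r %% (q - 1)) * q ^ (m - r %/ (q - 1) - 1))%N.

Lemma Dfun_gt0 r m : (0 < Dfun r m)%N.
Proof.
rewrite /Dfun; case: ifP => // _; rewrite muln_gt0 qX_gt0 andbT.
have hq := q_gt1; have := @ltn_pmod r (q - 1) (ltac:(lia)); lia.
Qed.

Lemma divmod_uniq Q a b : (b < Q)%N -> ((a * Q + b) %/ Q = a /\ (a * Q + b) %% Q = b)%N.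
Proof.
move=> hb; have hQ : (0 < Q)%N by lia.
by rewrite divnMDl // divn_small // addn0 modnMDl modn_small.
Qed.

Lemma Dfun_step r m E : (E < q)%N -> (E <= r)%N ->
  (Dfun r m.+1 <= (q - E) * Dfun (r - E) m)%N.
Proof.
move=> hE hEr.
have hq := q_gt1; set Q := (q - 1)%N.
have hQ : (0 < Q)%N by rewrite /Q; lia.
have hD := Dfun_gt0 (r - E) m.
rewrite {1}/Dfun -/Q; case: ifP => h1.
  by rewrite muln_gt0 hD andbT; lia.
have hrs := divn_eq r Q; have hs := ltn_pmod r hQ.
move: hrs hs; set t := (r %/ Q)%N; set s := (r %% Q)%N => hrs hs.
have htm : (t <= m)%N.
  move/negbT: h1; rewrite -ltnNge hrs => h1.
  have : (t * Q < m.+1 * Q)%N by apply: leq_ltn_trans h1; apply: leq_addr.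
  by rewrite ltn_pmul2r.
rewrite /Dfun -/Q; case: ifP => h2.
  have htm' : t = m.
    apply/eqP; rewrite eqn_leq htm /=.
    have : (m * Q <= t * Q + s - E)%N by rewrite -hrs.
    move=> h3; have : (m * Q < t.+1 * Q)%N.
      by apply: leq_ltn_trans h3 _; rewrite mulSn; lia.
    by rewrite ltn_pmul2r.
  rewrite htm' subSnn subnn expn0 muln1 muln1.
  have : (E <= s)%N by move: h2; rewrite hrs htm'; lia.
  lia.
have [hEs|hEs] := leqP E s.
  have hre : (r - E = t * Q + (s - E))%N by lia.
  have [hd hm] := @divmod_uniq Q t (s - E)%N (ltac:(lia) : (s - E < Q)%N).
  rewrite hre hd hm.
  have htm2 : (t < m)%N.
    move/negbT: h2; rewrite -ltnNge hre => h2.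
    have : (t * Q < m * Q)%N by apply: leq_ltn_trans h2; apply: leq_addr.
    by rewrite ltn_pmul2r.
  have -> : (m.+1 - t - 1 = (m - t - 1).+1)%N by lia.
  rewrite expnS mulnA mulnA leq_mul2r; apply/orP; right.
  have hQq : (Q = #|F| - 1)%N by [].
  move: hQq hs hEs hE; move: #|F| => qq hQq hs hEs hE.
  have [d hd'] : exists d, s = (E + d)%N by exists (s - E)%N; lia.
  have [a ha] : exists a, qq = (E + d + a)%N by exists (qq - E - d)%N; lia.
  have -> : (qq - s = a)%N by lia.
  have -> : (qq - E = d + a)%N by lia.
  have -> : (qq - (s - E) = E + a)%N by lia.
  rewrite ha; nia.
have ht1 : (0 < t)%N.
  case: (posnP t) => // ht0; move: hEr; rewrite hrs ht0 mul0n add0n; lia.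
have hre : (r - E = t.-1 * Q + (s + Q - E))%N.
  rewrite hrs; case: (t) ht1 => // t' _ /=.
  rewrite mulSn; lia.
have [hd hm] := @divmod_uniq Q t.-1 (s + Q - E)%N (ltac:(lia) : (s + Q - E < Q)%N).
rewrite hre hd hm.
have -> : (m.+1 - t - 1 = m - t.-1 - 1)%N by lia.
rewrite mulnA leq_mul2r; apply/orP; right.
have hQq : (Q = #|F| - 1)%N by [].
move: hQq hs hEs hE; move: #|F| => qq hQq hs hEs hE.
have [u hu] : exists u, E = (s + 1 + u)%N by exists (E - s - 1)%N; lia.
have [v hv] : exists v, qq = (E + 1 + v)%N by exists (qq - E - 1)%N; lia.
have -> : (qq - s = u + v + 2)%N by lia.
have -> : (qq - E = v + 1)%N by lia.
have -> : (qq - (s + Q - E) = u + 2)%N by lia.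
nia.
Qed.


Definition tl m (mon : 'X_{1..m.+1}) : 'X_{1..m} := [multinom mon (lift ord0 i) | i < m].

Definition red (k : nat) : nat := if k == 0%N then 0%N else (k.-1 %% (q - 1)).+1.

Lemma red_lt k : (red k < q)%N.
Proof.
rewrite /red; case: eqP => _; first exact: q_gt0.
have hq := q_gt1; have := @ltn_pmod k.-1 (q - 1) (ltac:(lia)); lia.
Qed.

Lemma red_le k : (red k <= k)%N.
Proof.
rewrite /red; case: eqP => // hk.
have := leq_mod k.-1 (q - 1); lia.
Qed.

Lemma expQ1 (a : F) : a != 0 -> a ^+ (q - 1) = 1.
Proof.
move=> ha; have hq := q_gt1.
have hq1 : q = (q - 1).+1 by lia.
have := expf_card a; rewrite [in X in X = _ -> _]hq1 exprS => h.
by apply: (mulfI ha); rewrite mulr1.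
Qed.

Lemma red_pow (a : F) k : a ^+ k = a ^+ red k.
Proof.
rewrite /red; case: eqP => [-> //|hk].
have hq := q_gt1.
have {1}-> : k = ((k.-1 %/ (q - 1)) * (q - 1) + (k.-1 %% (q - 1)).+1)%N.
  by have := divn_eq k.-1 (q - 1); lia.
have [->|ha] := eqVneq a 0; first by rewrite !expr0n addnS.
by rewrite exprD mulnC exprM expQ1 // expr1n mul1r.
Qed.

Definition Hn m (p : {mpoly F[m.+1]}) (e : nat) : {mpoly F[m]} :=
  \sum_(mon <- msupp p | red (mon ord0) == e) p@_mon *: 'X_[tl mon].

Lemma mdeg_tl m (mon : 'X_{1..m.+1}) : mdeg mon = (mon ord0 + mdeg (tl mon))%N.
Proof.
rewrite !mdegE big_ord_recl; congr (_ + _)%N.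
by apply: eq_bigr => i _; rewrite mnmE.
Qed.

Lemma Hn_size m r (p : {mpoly F[m.+1]}) e : (msize p <= r.+1)%N ->
  (msize (Hn p e) <= (r - e).+1)%N.
Proof.
move=> hp; apply: leq_trans (msize_sum _ _ _) _.
apply/bigmax_leqP_seq => mon hmon /eqP he.
apply: leq_trans (msizeZ_le _ _) _; rewrite msizeX ltnS.
have := msize_mdeg_lt hmon; rewrite mdeg_tl => h.
have := red_le (mon ord0); lia.
Qed.

Lemma Hn_decomp m (p : {mpoly F[m.+1]}) (x : 'I_m.+1 -> F) :
  p.@[x] = \sum_(e < q) x ord0 ^+ e * (Hn p e).@[fun i => x (lift ord0 i)].
Proof.
rewrite mevalE (@partition_big _ _ _ _ (msupp p) _ (fun _ => true) (fun mon : 'X_{1..m.+1} => Ordinal (red_lt (mon ord0))) xpredT) //=.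
apply: eq_bigr => e _.
rewrite /Hn (big_morph (meval (fun i => x (lift ord0 i))) (mevalD _) (meval0 _)) mulr_sumr.
apply: eq_big => [mon|mon /eqP he]; first by rewrite -val_eqE.
rewrite mevalZ mevalX big_ord_recl mulrCA; congr (_ * _).
  by rewrite -he /= -red_pow.
by congr (_ * _); apply: eq_bigr => i _; rewrite mnmE.
Qed.


Definition phi m (a : F) (y : {ffun 'I_m -> F}) : {ffun 'I_m.+1 -> F} :=
  [ffun i => if unlift ord0 i is Some j then y j else a].

Lemma phi0 m a (y : {ffun 'I_m -> F}) : phi a y ord0 = a.
Proof. by rewrite ffunE unlift_none. Qed.

Lemma phiS m a (y : {ffun 'I_m -> F}) j : phi a y (lift ord0 j) = y j.
Proof. by rewrite ffunE liftK. Qed.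

Lemma phi_inj m : injective (fun z : F * {ffun 'I_m -> F} => phi z.1 z.2).
Proof.
move=> [a1 y1] [a2 y2] /= h.
have ha : a1 = a2 by rewrite -(phi0 a1 y1) h phi0.
congr (_, _) => //; apply/ffunP => j.
by rewrite -(phiS a1 y1) h phiS.
Qed.

Lemma count_pairs m (P : F -> {ffun 'I_m -> F} -> bool) :
  #|[set z : F * {ffun 'I_m -> F} | P z.1 z.2]| =
  (\sum_(y : {ffun 'I_m -> F}) #|[set a | P a y]|)%N.
Proof.
rewrite -sum1_card.
rewrite (eq_bigl (fun z : F * {ffun 'I_m -> F} => xpredT z.1 && P z.1 z.2)); last first.
  by move=> z; rewrite inE.
rewrite -(pair_big_dep xpredT P (fun _ _ => 1%N)) /=.
rewrite (exchange_big_dep xpredT) //=.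
apply: eq_bigr => y _; rewrite -sum1_card; apply: eq_bigl => a; by rewrite inE.
Qed.

Lemma Hn_big m (p : {mpoly F[m.+1]}) e : (q <= e)%N -> Hn p e = 0.
Proof.
move=> he; rewrite /Hn big1_seq // => mon /andP[/eqP hm _].
by have := red_lt (mon ord0); rewrite hm; lia.
Qed.

Lemma ar2 (u v w qq e : nat) : (u + v = qq -> u < w -> w <= e.+1 -> qq - e <= v)%N.
Proof. lia. Qed.

Lemma LB m : forall r (p : {mpoly F[m]}), (msize p <= r.+1)%N ->
  (exists x : {ffun 'I_m -> F}, p.@[x] != 0) ->
  (Dfun r m <= #|[set x : {ffun 'I_m -> F} | p.@[x] != 0%R]|)%N.
Proof.
elim: m => [|m IH] r p hp [x0 hx0].
  rewrite /Dfun mul0n leq0n card_gt0; apply/set0Pn; exists x0; by rewrite inE.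
have good_ex : exists e : 'I_q, [exists y : {ffun 'I_m -> F}, (Hn p e).@[y] != 0].
  apply/existsP; apply: contraR hx0 => /existsPn H.
  rewrite Hn_decomp big1 // => e _.
  have := H e; rewrite negb_exists => /forallP /(_ [ffun i => x0 (lift ord0 i)]).
  rewrite negbK => /eqP h.
  by rewrite (@meval_eq _ _ _ [ffun i => x0 (lift ord0 i)]) ?h ?mulr0 // => i; rewrite ffunE.
case: good_ex => e0 he0.
case: (@arg_maxnP _ e0 (fun e : 'I_q => [exists y : {ffun 'I_m -> F}, (Hn p e).@[y] != 0]) (fun e => val e) he0) => E hE hmax.
have hz : forall (e : nat) (y : {ffun 'I_m -> F}), (E < e)%N -> (Hn p e).@[y] = 0.
  move=> e y he; have [heq|heq] := ltnP e q; last by rewrite Hn_big // meval0.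
  apply/eqP; apply: contraTT he => hy; rewrite -leqNgt.
  apply: (hmax (Ordinal heq)); apply/existsP; by exists y.
have hEr : (E <= r)%N.
  rewrite leqNgt; apply/negP => hrE.
  move/existsP: hE => [y]; rewrite /Hn big1_seq ?meval0 ?eqxx // => mon /andP[/eqP hm hmon].
  have := msize_mdeg_lt hmon; rewrite mdeg_tl => h1.
  have := red_le (mon ord0); rewrite hm; lia.
have hIH := IH (r - E)%N (Hn p E) (Hn_size E hp) (existsP hE).
have hcount : ((q - E) * #|[set y : {ffun 'I_m -> F} | (Hn p E).@[y] != 0%R]|
                 <= #|[set x : {ffun 'I_m.+1 -> F} | p.@[x] != 0%R]|)%N.
  apply: leq_trans (_ : #|[set z : F * {ffun 'I_m -> F} | p.@[phi z.1 z.2] != 0%R]| <= _)%N.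
    rewrite (count_pairs (fun a y => p.@[phi a y] != 0)) mulnC -sum_nat_const big_mkcond /=.
    apply: leq_sum => y _; case: ifP => // hy.
    rewrite inE in hy.
    set P := \poly_(i < q) (Hn p i).@[y].
    have hPa : forall a, P.[a] = p.@[phi a y].
      move=> a; rewrite horner_poly Hn_decomp; apply: eq_bigr => e _.
      rewrite phi0 mulrC; congr (_ * _); apply: meval_eq => i; by rewrite phiS.
    have hP0 : P != 0.
      apply: contraNneq hy => hP; have := coef_poly q (fun i => (Hn p i).@[y]) E.
      by rewrite -/P hP coef0 ltn_ord => <-.
    have hPs : (size P <= E.+1)%N.
      apply/leq_sizeP => j hj; rewrite coef_poly; case: ifP => // _; apply: hz; lia.
    have hroots : (#|[set a | p.@[phi a y] == 0%R]| < size P)%N.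
      rewrite cardE; apply: max_poly_roots => //; last exact: enum_uniq.
      apply/allP => a; rewrite mem_enum inE /root hPa; exact.
    have hC : (#|[set a | p.@[phi a y] == 0%R]| + #|~: [set a | p.@[phi a y] == 0%R]| = q)%N
      := cardsC [set a | p.@[phi a y] == 0%R].
    have -> : [set a | p.@[phi a y] != 0] = ~: [set a | p.@[phi a y] == 0%R].
      by apply/setP => a; rewrite !inE.
    exact: ar2 hC hroots hPs.
  rewrite -(card_imset _ (@phi_inj m)); apply: subset_leq_card.
  apply/subsetP => x /imsetP[z]; rewrite !inE => hz' ->; by [].
apply: leq_trans (Dfun_step m (ltn_ord E) hEr) _.
apply: leq_trans hcount; rewrite leq_mul2l hIH orbT //.
Qed.

Variable alpha : 'I_#|F| -> F.
Hypothesis alpha_inj : injective alpha.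
Hypothesis alpha0 : forall i : 'I_#|F|, nat_of_ord i = 0%N -> alpha i = 0.

Definition psi m (j : 'I_(q ^ m)) : {ffun 'I_m -> F} := [ffun l => @RMpoint F alpha m j l].

Lemma psi_inj m : injective (@psi m).
Proof.
move=> j j' h; apply: val_inj; apply: (@prefix_eq m); rewrite ?ltn_ord // => l hl.
have := congr1 (fun f : {ffun 'I_m -> F} => f (Ordinal hl)) h.
rewrite !ffunE /RMpoint => /alpha_inj /(congr1 val) /=; by [].
Qed.

Lemma psi_bij m : bijective (@psi m).
Proof. by apply: (inj_card_bij (@psi_inj m)); rewrite card_ffun !card_ord. Qed.

Lemma card_psi m (P : pred {ffun 'I_m -> F}) :
  #|[set j | P (psi j)]| = #|[set x | P x]|.
Proof.
rewrite -(card_imset _ (@psi_inj m)); apply: eq_card => x.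
rewrite inE; apply/imsetP/idP => [[j]|hx]; first by rewrite inE => h ->.
have [g hg1 hg2] := psi_bij m; exists (g x); by rewrite ?inE hg2.
Qed.

Lemma wt_evalvec m (p : {mpoly F[m]}) :
  wt (@evalvec F alpha m p) = #|[set x : {ffun 'I_m -> F} | p.@[x] != 0]|.
Proof.
rewrite /wt -(card_psi (fun x => p.@[x] != 0)); apply: eq_card => j.
rewrite !inE mxE; congr (_ != _); apply: meval_eq => l; by rewrite ffunE.
Qed.

Lemma pboolP (P : Prop) : pbool P = true <-> P.
Proof. by rewrite /pbool; case: excluded_middle_informative. Qed.

Lemma inRMP r m c : c \in RM alpha r m <-> @inRM F alpha r m c.
Proof. by rewrite inE; apply: pboolP. Qed.

Lemma RM0 r m : 0 \in RM alpha r m.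
Proof.
apply/inRMP; exists 0; split; first by rewrite msize0.
by apply/rowP => j; rewrite !mxE meval0.
Qed.

Lemma RMD r m c1 c2 : c1 \in RM alpha r m -> c2 \in RM alpha r m -> c1 + c2 \in RM alpha r m.
Proof.
move=> /inRMP[p1 [h1 ->]] /inRMP[p2 [h2 ->]]; apply/inRMP; exists (p1 + p2); split.
  by apply: leq_trans (msizeD_le _ _) _; rewrite geq_max h1 h2.
by apply/rowP => j; rewrite !mxE mevalD.
Qed.

Lemma RMZ r m a c : c \in RM alpha r m -> a *: c \in RM alpha r m.
Proof.
move=> /inRMP[p1 [h1 ->]]; apply/inRMP; exists (a *: p1); split.
  by apply: leq_trans (msizeZ_le _ _) _.
by apply/rowP => j; rewrite !mxE mevalZ.
Qed.

Lemma RM_span r m v : v \in <<enum (RM alpha r m)>>%VS -> v \in RM alpha r m.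
Proof.
move=> hv; rewrite (coord_span (X := in_tuple (enum (RM alpha r m))) hv).
apply: (big_ind (fun c => c \in RM alpha r m)); [exact: RM0 | exact: RMD |].
move=> i _; apply: RMZ; rewrite -mem_enum; apply: mem_nth.
exact: ltn_ord.
Qed.

Lemma LB_RM r m c : c \in RM alpha r m -> c != 0 -> (Dfun r m <= wt c)%N.
Proof.
move=> /inRMP[p [hp ->]] hc; rewrite wt_evalvec; apply: LB => //.
have [j hj] := nz_supp hc; exists (psi j).
move: hj; rewrite mxE; apply: contraNneq => h; rewrite -h.
by apply/eqP; apply: meval_eq => l; rewrite ffunE.
Qed.

Lemma ar3 u v a b : (u <= a.+1 -> v <= b.+1 -> (u + v).-1 <= (a + b).+1)%N.
Proof. lia. Qed.

Lemma msizeM_le' m (p1 p2 : {mpoly F[m]}) a b :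
  (msize p1 <= a.+1)%N -> (msize p2 <= b.+1)%N -> (msize (p1 * p2) <= (a + b).+1)%N.
Proof.
move=> h1 h2.
have [->|n1] := eqVneq p1 0; first by rewrite mul0r msize0.
have [->|n2] := eqVneq p2 0; first by rewrite mulr0 msize0.
rewrite msizeM //; exact: ar3 h1 h2.
Qed.

Lemma msize_prod m (I : Type) (s : seq I) (P : pred I) (G : I -> {mpoly F[m]}) (d : I -> nat) :
  (forall i, P i -> (msize (G i) <= (d i).+1)%N) ->
  (msize (\prod_(i <- s | P i) G i) <= (\sum_(i <- s | P i) d i).+1)%N.
Proof.
move=> H; elim: s => [|i s IH]; first by rewrite !big_nil msize1.
rewrite !big_cons; case: ifP => // hP.
exact: msizeM_le' (H i hP) IH.
Qed.

Lemma msize_Xi m (l : 'I_m) : (msize ('X_l : {mpoly F[m]}) <= 2)%N.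
Proof. by rewrite msizeX mdeg1. Qed.

Lemma msize_Xpow m (l : 'I_m) k : (msize (('X_l : {mpoly F[m]}) ^+ k) <= k.+1)%N.
Proof.
elim: k => [|k IH]; first by rewrite expr0 msize1.
rewrite exprS; have := msizeM_le' (msize_Xi l) IH; by rewrite add1n.
Qed.

Lemma msize_A m (l : 'I_m) k : (msize (1 - ('X_l : {mpoly F[m]}) ^+ k) <= k.+1)%N.
Proof.
apply: leq_trans (msizeD_le _ _) _; rewrite msizeN geq_max msize1 msize_Xpow; lia.
Qed.

Lemma msize_B m (l : 'I_m) c : (msize (('X_l : {mpoly F[m]}) - c%:MP) <= 2)%N.
Proof.
apply: leq_trans (msizeD_le _ _) _; rewrite msizeN geq_max msize_Xi msizeC.
by case: (c != 0).
Qed.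

Definition Apol m t : {mpoly F[m]} := \prod_(l < m | (l < t)%N) (1 - 'X_l ^+ (q - 1)).
Definition Bpol m t s : {mpoly F[m]} :=
  \prod_(l < m | val l == t) \prod_(i : 'I_q | (q - s <= i)%N) ('X_l - (alpha i)%:MP).
Definition w0 m t s := Apol m t * Bpol m t s.

Lemma w0_size m t s : (msize (w0 m t s) <= (t * (q - 1) + s).+1)%N.
Proof.
have hA : (msize (Apol m t) <= (t * (q - 1)).+1)%N.
  apply: leq_trans (@msize_prod _ _ _ _ _ (fun _ => (q - 1)%N) _) _.
    by move=> l _; apply: msize_A.
  rewrite ltnS (eq_bigl (fun l => l \in [set l : 'I_m | (l < t)%N])); last by move=> l; rewrite inE.
  rewrite sum_nat_const leq_mul2r; apply/orP; right.
  have := @card_ord_le m [set l : 'I_m | (l < t)%N] (iota 0 t).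
  by rewrite size_iota; apply => l'; rewrite inE mem_iota add0n leq0n.
have hB : (msize (Bpol m t s) <= s.+1)%N.
  apply: leq_trans (@msize_prod _ _ _ _ _ (fun l => \sum_(i : 'I_q | (q - s <= i)%N) 1)%N _) _.
    move=> l _; apply: leq_trans (@msize_prod _ _ _ _ _ (fun _ => 1%N) _) _ => //.
    by move=> i _; apply: msize_B.
  have hs : (\sum_(i : 'I_q | (q - s <= i)%N) 1 <= s)%N.
    rewrite sum1_card; have := @card_ord_le q [set i : 'I_q | (q - s <= i)%N] (iota (q - s) s).
    rewrite size_iota (eq_card (B := [set i : 'I_q | (q - s <= i)%N])); last by move=> i; rewrite inE.
    apply => i; rewrite inE mem_iota; have := ltn_ord i; move: (nat_of_ord i) => k; lia.
  rewrite ltnS; case: (ltnP t m) => htm.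
    rewrite (big_pred1 (Ordinal htm)) //; by move=> l; rewrite /= -val_eqE.
  rewrite big_pred0 // => l; have := ltn_ord l; apply: contraTF => /eqP ->; lia.
exact: msizeM_le' hA hB.
Qed.


Lemma meval_exp m (x : 'I_m -> F) (p : {mpoly F[m]}) k : (p ^+ k).@[x] = p.@[x] ^+ k.
Proof. elim: k => [|k IH]; by rewrite ?expr0 ?meval1 // !exprS mevalM IH. Qed.

Lemma one_sub_nz (y : F) : (1 - y ^+ (q - 1) != 0) = (y == 0).
Proof.
have hq := q_gt1.
have hq0 : (q - 1 == 0)%N = false by apply/eqP; lia.
have [->|hy] := eqVneq y 0; first by rewrite expr0n hq0 subr0 oner_neq0.
by rewrite expQ1 // subrr eqxx.
Qed.

Lemma w0_eval_nz m t s (x : 'I_m -> F) :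
  ((w0 m t s).@[x] != 0) <->
  ((forall l : 'I_m, (l < t)%N -> x l = 0) /\
   (forall l : 'I_m, val l = t -> forall i : 'I_q, (q - s <= i)%N -> x l != alpha i)).
Proof.
rewrite /w0 /Apol /Bpol mevalM mulf_eq0 negb_or.
rewrite !(big_morph (meval x) (mevalM x) (meval1 x)).
split.
  move=> /andP[/prodf_neq0 hA /prodf_neq0 hB]; split.
    move=> l hl; have := hA l hl; rewrite mevalB meval1 meval_exp mevalXU one_sub_nz.
    by move/eqP.
  move=> l hl i hi; have := hB l (introT eqP hl).
  rewrite (big_morph (meval x) (mevalM x) (meval1 x)) => /prodf_neq0 /(_ i hi).
  by rewrite mevalB mevalXU mevalC subr_eq0.
move=> [hA hB]; apply/andP; split; apply/prodf_neq0.
  by move=> l hl; rewrite mevalB meval1 meval_exp mevalXU one_sub_nz hA.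
move=> l /eqP hl; rewrite (big_morph (meval x) (mevalM x) (meval1 x)); apply/prodf_neq0.
by move=> i hi; rewrite mevalB mevalXU mevalC subr_eq0 hB.
Qed.

Lemma alpha_eq0 (d : 'I_q) : (alpha d == 0) = (val d == 0%N).
Proof.
have h0 : alpha (Ordinal q_gt0) = 0 by apply: alpha0.
apply/eqP/eqP => [h|h]; last by apply: alpha0.
by have := alpha_inj (etrans h (esym h0)) => ->.
Qed.

Lemma w0_supp m t s (j : 'I_(q ^ m)) : (t <= m)%N -> (s < q - 1)%N -> (t = m -> s = 0%N) ->
  ((w0 m t s).@[@RMpoint F alpha m j] != 0) <-> (j < Dfun (t * (q - 1) + s) m)%N.
Proof.
move=> htm hs hts; rewrite w0_eval_nz.
have hq := q_gt1.
have [hd hmod] := @divmod_uniq (q - 1) t s hs.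
rewrite /Dfun hd hmod.
have hdig : forall l : 'I_m, val (@digit F m j l) = (j %/ q ^ (m - 1 - l) %% q)%N by [].
have hA : (forall l : 'I_m, (l < t)%N -> @RMpoint F alpha m j l = 0) <->
          (forall l, (l < t)%N -> (j %/ q ^ (m - 1 - l)) %% q = 0)%N.
  split=> H l hl.
    have hlm : (l < m)%N by lia.
    by have := H (Ordinal hlm) hl; rewrite /RMpoint => /eqP; rewrite alpha_eq0 hdig => /eqP.
  by apply/eqP; rewrite /RMpoint alpha_eq0 hdig; apply/eqP; apply: H.
rewrite hA (zero_prefix htm (ltn_ord j)).
case: (ltnP t m) => htm2.
  have hle : ~~ (m * (q - 1) <= t * (q - 1) + s)%N.
    rewrite -ltnNge; apply: leq_trans (_ : (t.+1 * (q - 1) <= _)%N).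
      by rewrite mulSn; lia.
    by rewrite leq_mul2r htm2 orbT.
  rewrite (negbTE hle) -(@supp_prefix m t s j htm2 ltac:(lia) (ltn_ord j)).
  rewrite (zero_prefix (ltnW htm2) (ltn_ord j)).
  have hB : (forall l : 'I_m, val l = t -> forall i : 'I_q, (q - s <= i)%N ->
             @RMpoint F alpha m j l != alpha i) <-> ((j %/ q ^ (m - 1 - t)) %% q < q - s)%N.
    split=> H.
      have := H (Ordinal htm2) erefl (@digit F m j (Ordinal htm2)).
      rewrite /RMpoint eqxx /= => /implyP; rewrite implybF -ltnNge; exact: id.
    move=> l hl i hi; rewrite /RMpoint; apply/negP => /eqP /alpha_inj hdi.
    have hl' : nat_of_ord l = t := hl.
    by move: hi; rewrite -hdi hdig hl' leqNgt H.
  rewrite hB; tauto.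
have htm3 : t = m by lia.
have hs0 := hts htm3; subst t s.
rewrite addn0 leqnn subnn expn0; split.
  by case.
move=> h; split => // l hl; have hl' : nat_of_ord l = m := hl.
by have := ltn_ord l; rewrite hl' ltnn.
Qed.

Lemma dim_le n (C : {set 'rV[F]_n}) : (code_dim C <= n)%N.
Proof.
rewrite /code_dim; apply: leq_trans (dimvS (subvf _)) _.
by rewrite dimvf /dim /= mul1n.
Qed.

Lemma singleton n (C : {set 'rV[F]_n}) (j0 : 'I_n) :
  (forall v, v \in <<enum C>>%VS -> v \in C) -> (1 <= code_dim C)%N ->
  exists c, [/\ c \in C, c != 0 & forall j : 'I_n, (n - code_dim C < j)%N -> c 0 j = 0].
Proof.
move=> hC hk; have hkn := dim_le C.
move: hk hkn; rewrite /code_dim; set U := <<enum C>>%VS; set k := \dim U => hk hkn.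
pose idx (i : 'I_k.-1) : 'I_n := insubd j0 (n - k + 1 + i)%N.
pose M : 'M[F]_(n, k.-1) := \matrix_(j, i) (j == idx i)%:R.
pose f : 'Hom('rV[F]_n, 'rV[F]_k.-1) := linfun (mulmxr M).
have hdim := limg_ker_dim f U.
have himg : (\dim (f @: U) <= k.-1)%N.
  by apply: leq_trans (dimvS (subvf _)) _; rewrite dimvf /dim /= mul1n.
have hne : (U :&: lker f)%VS != 0%VS.
  rewrite -dimv_eq0; apply/eqP => h0; rewrite h0 add0n -/k in hdim; lia.
set v := vpick (U :&: lker f)%VS.
have hv : v \in (U :&: lker f)%VS := memv_pick _.
move: hv; rewrite memv_cap => /andP[hvU hvK].
exists v; split; first exact: hC.
  by rewrite vpick0.
move=> j hj.
have hjk : (j - (n - k + 1) < k.-1)%N by have := ltn_ord j; lia.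
set i := Ordinal hjk.
have hij : idx i = j.
  apply/val_inj; rewrite /idx val_insubd /=; have := ltn_ord j.
  have -> : (n - k + 1 + (j - (n - k + 1)) = j)%N by lia.
  by move=> ->.
move: hvK; rewrite memv_ker lfunE /= => /eqP /rowP /(_ i).
rewrite !mxE (bigD1 (idx i)) //= mxE eqxx mulr1 big1 ?addr0 ?hij //.
move=> j' hj'; rewrite mxE; case: eqP => [h|_]; last by rewrite mulr0.
by move: hj'; rewrite h hij eqxx.
Qed.


Lemma Dfun_eq m t s : (t <= m)%N -> (s < q - 1)%N -> (t = m -> s = 0%N) ->
  Dfun (t * (q - 1) + s) m = if (t < m)%N then ((q - s) * q ^ (m - t - 1))%N else 1%N.
Proof.
move=> htm hs hts; have hq := q_gt1.
have [hd hmod] := @divmod_uniq (q - 1) t s hs.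
rewrite /Dfun hd hmod; case: (ltnP t m) => htm2.
  have hle : ~~ (m * (q - 1) <= t * (q - 1) + s)%N.
    rewrite -ltnNge; apply: leq_trans (_ : (t.+1 * (q - 1) <= _)%N).
      by rewrite mulSn; lia.
    by rewrite leq_mul2r htm2 orbT.
  by rewrite (negbTE hle).
have htm3 : t = m by lia.
by rewrite (hts htm3) htm3 addn0 leqnn.
Qed.

Lemma Dfun_le m t s : (t <= m)%N -> (s < q - 1)%N -> (t = m -> s = 0%N) ->
  (Dfun (t * (q - 1) + s) m <= q ^ m)%N.
Proof.
move=> htm hs hts; rewrite Dfun_eq //; case: ifP => h; last exact: qX_gt0.
apply: leq_trans (_ : (q * q ^ (m - t - 1) <= _)%N).
  by rewrite leq_mul2r leq_subr orbT.
rewrite -expnS leq_exp2l ?q_gt1 //; lia.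
Qed.

Lemma ratcond m t s b : (t <= m)%N -> (s < q - 1)%N -> (t = m -> s = 0%N) ->
  ((q ^ m)%:R - (q - s)%:R * (q%:R) ^ (m%:Z - t%:Z - 1) + 1 <= (b%:R : rat))
  <-> (q ^ m + 1 <= b + Dfun (t * (q - 1) + s) m)%N.
Proof.
move=> htm hs hts; have hDle := Dfun_le htm hs hts; move: hDle.
rewrite Dfun_eq //; case: (ltnP t m) => htm2 hDle.
  have -> : m%:Z - t%:Z - 1 = (m - t - 1)%N.
    by rewrite subzn ?(ltnW htm2) // subzn //; lia.
  rewrite -exprnP -natrX -natrM -natrB // natr1 ler_nat.
  move: hDle; move: ((q - s) * q ^ (m - t - 1))%N => D; lia.
have htm3 : t = m by lia.
rewrite (hts htm3) htm3 subrr sub0r exprN1 subn0 mulfV ?pnatr_eq0 -?lt0n ?q_gt0 //.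
rewrite subrK ler_nat; lia.
Qed.

Lemma ar4 a j : (a + 1 <= j -> a < j)%N.
Proof. lia. Qed.

Lemma A1 u D N k b : (u <= D + b - 1 -> minn (N - k + b) N <= u -> b + D < N + 1 ->
  D <= N - k + 1 -> k <= N -> 1 <= k -> b <= N -> 0 < D -> D = N - k + 1)%N.
Proof. lia. Qed.
Lemma A2 u D N k : (u <= D + 1 - 1 -> D <= u -> D = N - k + 1 -> k <= N -> 1 <= k ->
  u = minn (N - k + 1) N)%N.
Proof. lia. Qed.
Lemma A3 u D N k : (D <= u -> D = N - k + 1 -> k <= N -> 1 <= k -> minn (N - k + 1) N <= u)%N.
Proof. lia. Qed.
Lemma A4 u v b D N : (minn N (v + b - 1) <= u -> D <= v -> N + 1 <= b + D -> N <= u)%N.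
Proof. lia. Qed.
Lemma A5 u N b D k : (u <= N -> N <= u -> N + 1 <= b + D -> D <= N - k + 1 -> k <= N -> 1 <= k ->
  u = minn (N - k + b) N)%N.
Proof. lia. Qed.
Lemma A6 u N b D k : (N <= u -> N + 1 <= b + D -> D <= N - k + 1 -> k <= N -> 1 <= k ->
  minn (N - k + b) N <= u)%N.
Proof. lia. Qed.
Lemma A7 u v N b k : (minn N (v + b - 1) <= u -> minn (N - k + 1) N <= v -> k <= N -> 1 <= k ->
  1 <= b -> minn (N - k + b) N <= u)%N.
Proof. lia. Qed.
Lemma A8 u N k b : (u <= N - k + 1 + b - 1 -> u <= N -> minn (N - k + b) N <= u ->
  u = minn (N - k + b) N)%N.
Proof. lia. Qed.

Lemma main_sec m r t s b :
  (1 <= m)%N ->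
  (r <= m * (q - 1))%N ->
  r = (t * (q - 1) + s)%N ->
  (s < q - 1)%N ->
  (1 <= b <= q ^ m)%N ->
  (bsymbol_MDS b (RM alpha r m) <->
   ((q ^ m)%:R - (q - s)%:R * (q%:R) ^ (m%:Z - t%:Z - 1) + 1 <= (b%:R : rat)
    \/ bsymbol_MDS 1 (RM alpha r m))).
Proof.
move=> hm hr hrts hs /andP[hb1 hbn].
have hq := q_gt1.
have htm : (t <= m)%N.
  have : (t * (q - 1) <= m * (q - 1))%N by apply: leq_trans hr; rewrite hrts leq_addr.
  by rewrite leq_mul2r; case/orP => // /eqP h; lia.
have hts : t = m -> s = 0%N.
  move=> htm'; move: hr; rewrite hrts htm' -{2}[(m * (q - 1))%N]addn0 leq_add2l; lia.
rewrite ratcond // -hrts.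
set D := Dfun r m.
have hLB : forall c, c \in RM alpha r m -> c != 0 -> (D <= wt c)%N := @LB_RM r m.
pose c0 := @evalvec F alpha m (w0 m t s).
have hc0C : c0 \in RM alpha r m.
  apply/inRMP; exists (w0 m t s); split => //; rewrite hrts; exact: w0_size.
have hc0 : forall j : 'I_(q ^ m), (c0 0 j != 0) <-> (j < D)%N.
  by move=> j; rewrite mxE /D hrts; apply: w0_supp.
have hD1 : (0 < D)%N := Dfun_gt0 r m.
pose j0 : 'I_(q ^ m) := Ordinal (qX_gt0 m).
have hc0nz : c0 != 0.
  apply/eqP => h; have := proj2 (hc0 j0) hD1; by rewrite h mxE eqxx.
have hc0supp : forall j : 'I_(q ^ m), (D <= j)%N -> c0 0 j = 0.
  move=> j hj; apply/eqP; apply: contraTT hj => h; rewrite -ltnNge; exact: (proj1 (hc0 j)).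
have hk1 : (1 <= code_dim (RM alpha r m))%N.
  rewrite lt0n /code_dim dimv_eq0; apply: contraNneq hc0nz => h0.
  have : c0 \in <<enum (RM alpha r m)>>%VS by apply: memv_span; rewrite mem_enum.
  by rewrite h0 memv0.
have [c1 [hc1C hc1nz hc1z]] := singleton j0 (@RM_span r m) hk1.
have hkn := dim_le (RM alpha r m).
move: hk1 hkn hc1z; set k := code_dim (RM alpha r m) => hk1 hkn hc1z.
have hwt1 : forall c : 'rV[F]_(q ^ m), wt c = w_b 1 c by move=> c; rewrite /w_b chi1.
have hDk : (D <= q ^ m - k + 1)%N.
  apply: leq_trans (hLB c1 hc1C hc1nz) _; rewrite hwt1.
  have := @UBb _ _ 1 (q ^ m - k + 1) c1 (isT : (1 <= 1)%N).
  rewrite addnK; apply => j hj; apply: hc1z; exact: ar4 hj.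
have hDn : (D <= q ^ m)%N by rewrite /D hrts; apply: Dfun_le.
rewrite /bsymbol_MDS /is_db -/k.
split.
  move=> [[cw hcwC [hcwnz hcw]] hall].
  case: (leqP (q ^ m + 1) (b + D)) => hcase; [by left | right].
  have hw0 : (w_b b c0 <= D + b - 1)%N by apply: UBb.
  have hm0 := hall c0 hc0C hc0nz.
  have hDeq := A1 hw0 hm0 hcase hDk hkn hk1 hbn hD1.
  split.
    exists c0 => //; split => //.
    have h1 : (w_b 1 c0 <= D + 1 - 1)%N by apply: UBb.
    have h2 := hLB c0 hc0C hc0nz; rewrite hwt1 in h2.
    exact: A2 h1 h2 hDeq hkn hk1.
  move=> c hc hcnz'; have := hLB c hc hcnz'; rewrite hwt1 => h.
  exact: A3 h hDeq hkn hk1.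
case=> [hcond|[[cw hcwC [hcwnz hcw]] hall1]].
  have hmin : forall c, c \in RM alpha r m -> c != 0 -> (q ^ m <= w_b b c)%N.
    move=> c hc hcnz; have h1 := LBb hcnz hb1; have h2 := hLB c hc hcnz.
    exact: A4 h1 h2 hcond.
  split.
    exists c0 => //; split => //.
    exact: A5 (wb_le_n b c0) (hmin c0 hc0C hc0nz) hcond hDk hkn hk1.
  move=> c hc hcnz; exact: A6 (hmin c hc hcnz) hcond hDk hkn hk1.
have hmin : forall c, c \in RM alpha r m -> (c != 0) -> (minn (q ^ m - k + b) (q ^ m) <= w_b b c)%N.
  move=> c hc hcnz; have h1 := LBb hcnz hb1; have h2 := hall1 c hc hcnz.
  rewrite -hwt1 in h2.
  exact: A7 h1 h2 hkn hk1 hb1.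
split; last exact: hmin.
exists c1 => //; split => //.
have h1 : (w_b b c1 <= (q ^ m - k + 1) + b - 1)%N.
  by apply: UBb => // j hj; apply: hc1z; exact: ar4 hj.
exact: A8 h1 (wb_le_n b c1) (hmin c1 hc1C hc1nz).
Qed.

End Main.

Theorem mainTheorem10 (F : finFieldType) (alpha : 'I_#|F| -> F) (m r t s b : nat) :
  injective alpha ->
  (forall i : 'I_#|F|, nat_of_ord i = 0%N -> alpha i = 0) ->
  (1 <= m)%N ->
  (r <= m * (#|F| - 1))%N ->
  r = (t * (#|F| - 1) + s)%N ->
  (s < #|F| - 1)%N ->
  (1 <= b <= #|F| ^ m)%N ->
  (bsymbol_MDS b (RM alpha r m) <->
   ((#|F| ^ m)%:R - (#|F| - s)%:R * (#|F|%:R) ^ (m%:Z - t%:Z - 1) + 1 <= (b%:R : rat)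
    \/ bsymbol_MDS 1 (RM alpha r m))).
Proof.
move=> ainj a0; exact: (main_sec ainj a0).
Qed.
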